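(* Let $\alpha_1, \alpha_2 \in \mathbb{R}$ be the two roots of an irreducible quadratic polynomial in $\mathbb{Q}[x]$ with $0 < \alpha_1 < 1 < \alpha_2$, and let $M' = \big\{ \sum_{i \in I} c_i (\alpha_1^i, \alpha_2^i) \mid c_i \in \mathbb{N}_0,\ I \subseteq \mathbb{Z},\ |I| < \infty \big\} \subseteq \mathbb{R}^2$. If $(v_1,v_2) \in M'$, then the set $M' \cap ([0,v_1] \times [0,v_2])$ is finite.
   Context: $M'$ is the image of $M_{\alpha_1} = \{f(\alpha_1) \mid f \in \mathbb{N}_0[x,x^{-1}]\}$ under the $\mathbb{Q}$-algebra embedding $\mathbb{Q}(\alpha_1) \to \mathbb{R}^2$, $x \mapsto (\sigma_1(x),\sigma_2(x))$, where $\sigma_i$ sends $\alpha_1 \mapsto \alpha_i$. *)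

(* Defs.v *)
From HB Require Import structures.
From mathcomp Require Import all_boot all_order all_algebra.
From mathcomp Require Import classical_sets cardinality reals.
Set Implicit Arguments. Unset Strict Implicit. Unset Printing Implicit Defensive.
Import Order.TTheory GRing.Theory Num.Theory.
Local Open Scope ring_scope.
Local Open Scope classical_set_scope.

(* M' = { sum_{i in I} c_i (a1^i, a2^i) | c_i in N_0, I a finite subset of Z }.
   The finite set I is given as a duplicate-free list of integers, and
   a1 ^ i is the integer power (exprz). *)
Definition Mprime (R : unitRingType) (a1 a2 : R) : set (R * R) :=
  [set z | exists (I : seq int) (c : int -> nat),
      uniq I /\
      z = (\sum_(i <- I) (c i)%:R * a1 ^ i, \sum_(i <- I) (c i)%:R * a2 ^ i)].

(* Main.v *)
Require Import Defs.
From HB Require Import structures.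
From mathcomp Require Import all_boot all_order all_algebra.
From mathcomp Require Import classical_sets cardinality reals.
From mathcomp Require Import lra.
Import Order.TTheory GRing.Theory Num.Theory.
Local Open Scope ring_scope.
Local Open Scope classical_set_scope.
Set Implicit Arguments. Unset Strict Implicit.

Lemma bern (R : realType) (x : R) n : 1 <= x -> 1 + n%:R * (x - 1) <= x ^+ n.
Proof.
move=> x1; elim: n => [|n IH]; first by rewrite expr0 mul0r addr0.
rewrite exprS -natr1.
have h0 : 0 <= n%:R * (x - 1) :> R by rewrite mulr_ge0 // subr_ge0.
have : x * (1 + n%:R * (x - 1)) <= x * x ^+ n by rewrite ler_wpM2l //; lra.
nra.
Qed.

Lemma growth (R : realType) (x v : R) : 1 < x ->
  exists N : nat, forall n, (N <= n)%N -> v < x ^+ n.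
Proof.
move=> x1; set y := `|v| / (x - 1).
have y0 : 0 <= y by rewrite divr_ge0 // subr_ge0 ltW.
exists (Num.Def.archi_bound y) => n Nn.
have := archi_boundP y0; set B := Num.Def.archi_bound y => hB.
have hn : (B%:R <= n%:R :> R) by rewrite ler_nat.
have := @bern R x n (ltW x1).
have hy : y * (x - 1) = `|v| by rewrite /y mulrVK // unitfE subr_eq0 gt_eqF.
have : `|v| < n%:R * (x - 1).
  rewrite -hy ltr_pM2r ?subr_gt0 //; exact: lt_le_trans hB hn.
have := ler_norm v. lra.
Qed.
Definition Tset {R : realType} (a1 a2 : R) (L : seq int) (K : nat) : set (R * R) :=
  [set z | exists h : int -> nat, (forall i, i \in L -> (h i < K)%N) /\
      z = (\sum_(i <- L) (h i)%:R * a1 ^ i, \sum_(i <- L) (h i)%:R * a2 ^ i)].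

Lemma Tset_fin (R : realType) (a1 a2 : R) L K : finite_set (Tset a1 a2 L K).
Proof.
elim: L => [|x L IH].
  apply: (sub_finite_set _ (finite_set1 (0, 0))) => z [h [_ ->]].
  by rewrite !big_nil.
have := finite_image2 (fun (k : nat) (w : R * R) =>
   (k%:R * a1 ^ x + w.1, k%:R * a2 ^ x + w.2)) (finite_II K) IH.
apply: sub_finite_set => z [h [hK ->]].
exists (h x); first by apply: hK; rewrite mem_head.
exists (\sum_(i <- L) (h i)%:R * a1 ^ i, \sum_(i <- L) (h i)%:R * a2 ^ i).
  by exists h; split => // i iL; apply: hK; rewrite in_cons iL orbT.
by rewrite !big_cons.
Qed.

Lemma sum_sub (V : nmodType) (S L : seq int) (F : int -> V) :
  uniq S -> uniq L -> {subset S <= L} ->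
  \sum_(i <- S) F i = \sum_(i <- L) (if i \in S then F i else 0).
Proof.
move=> uS uL sSL; rewrite -big_mkcond -big_filter.
apply: perm_big; apply: uniq_perm => //; first exact: filter_uniq.
by move=> i; rewrite mem_filter; case: (boolP (i \in S)) => // /sSL ->.
Qed.
Lemma key (R : realType) (x v : R) (k N n : nat) : 1 < x ->
  (forall n, (N <= n)%N -> v < x ^+ n) -> (0 < k)%N -> k%:R * x ^+ n <= v ->
  (n < N)%N /\ k%:R <= v.
Proof.
move=> x1 hN k0 hv.
have k1 : 1 <= k%:R :> R by rewrite ler1n.
have xn : 1 <= x ^+ n by rewrite exprn_ege1 // ltW.
split; last by apply: le_trans hv; rewrite ler_peMr // (le_trans ler01 k1).
rewrite ltnNge; apply/negP => /hN; apply/negP; rewrite -leNgt.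
apply: le_trans hv; rewrite ler_peMl //; exact: le_trans ler01 xn.
Qed.

Lemma term_le (R : realType) (I : seq int) (F : int -> R) i :
  uniq I -> i \in I -> (forall j, 0 <= F j) -> F i <= \sum_(j <- I) F j.
Proof.
move=> uI iI F0; rewrite (bigD1_seq i) //= lerDl; exact: sumr_ge0.
Qed.
Theorem lemma4p6 (R : realType) (p : {poly rat}) (a1 a2 : R) :
  size p = 3%N -> irreducible_poly p ->
  root (map_poly ratr p) a1 -> root (map_poly ratr p) a2 -> a1 != a2 ->
  0 < a1 < 1 -> 1 < a2 ->
  forall v1 v2 : R, Mprime a1 a2 (v1, v2) ->
  finite_set (Mprime a1 a2 `&` [set z | 0 <= z.1 <= v1 /\ 0 <= z.2 <= v2]).
Proof.
move=> _ _ _ _ _ /andP[a10 a11] a21 v1 v2 _.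
have ia1 : 1 < a1^-1 by rewrite invf_gt1.
have [N1 hN1] := growth v2 a21.
have [N2 hN2] := growth v1 ia1.
set N := maxn N1 N2.
set K := Num.Def.archi_bound (`|v1| + `|v2|).
have hK : (`|v1| + `|v2|) < K%:R by apply: archi_boundP; rewrite addr_ge0.
set L := undup ([seq - (i.+1)%:Z | i <- iota 0 N] ++ [seq i%:Z | i <- iota 0 N]).
apply: (sub_finite_set _ (Tset_fin a1 a2 L K)).
move=> z [[I [c [uI ->]]]] /= [/andP[h10 h11] /andP[h20 h21]].
set S := [seq i <- I | c i != 0%N].
have uS : uniq S by exact: filter_uniq.
have uL : uniq L by exact: undup_uniq.
have pos1 : forall j, 0 <= (c j)%:R * a1 ^ j.
  by move=> j; rewrite mulr_ge0 // exprz_ge0 // ltW.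
have pos2 : forall j, 0 <= (c j)%:R * a2 ^ j.
  by move=> j; rewrite mulr_ge0 // exprz_ge0 // ltW // (lt_trans ltr01).
have hS : forall i, i \in S -> i \in L /\ (c i < K)%N.
  move=> i; rewrite mem_filter => /andP[ci0 iI].
  have c0 : (0 < c i)%N by rewrite lt0n.
  have b1 := le_trans (term_le uI iI pos1) h11.
  have b2 := le_trans (term_le uI iI pos2) h21.
  have fin : (c i)%:R <= `|v1| + `|v2| -> (c i < K)%N.
    by move=> h; rewrite -(ltr_nat R); apply: le_lt_trans hK.
  move: c0 fin; case: i iI b1 b2 {ci0} => [n|n] iI b1 b2 c0 fin.
  - have [nN cv] := key a21 hN1 c0 b2.
    split; last first.
      apply: fin; apply: (le_trans cv); apply: (le_trans (ler_norm v2)); by rewrite lerDr.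
    rewrite mem_undup mem_cat; apply/orP; right; apply: map_f.
    by rewrite mem_iota /= add0n; apply: (leq_trans nN); rewrite leq_maxl.
  - have e : a1 ^ (Negz n) = a1^-1 ^+ n.+1 by rewrite exprVn.
    rewrite e in b1.
    have [nN cv] := key ia1 hN2 c0 b1.
    split; last first.
      apply: fin; apply: (le_trans cv); apply: (le_trans (ler_norm v1)); by rewrite lerDl.
    rewrite mem_undup mem_cat; apply/orP; left; rewrite NegzE; apply: map_f.
    by rewrite mem_iota /= add0n; exact: (leq_trans (ltnW nN) (leq_maxr N1 N2)).
have sSL : {subset S <= L} by move=> i /hS[].
exists (fun i => if i \in S then c i else 0%N); split.
  move=> i _; case: ifP => [/hS[]//|_].
  rewrite lt0n; apply/eqP => K0; move: hK; rewrite K0 ltNge addr_ge0 //.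
have conv : forall a : R, \sum_(i <- I) (c i)%:R * a ^ i =
    \sum_(i <- L) (if i \in S then c i else 0%N)%:R * a ^ i.
  move=> a; rewrite (bigID (fun i => c i != 0%N)) /=.
  rewrite [X in _ + X]big1 ?addr0 => [|i /negPn/eqP ->]; last by rewrite mul0r.
  rewrite -big_filter (sum_sub _ uS uL sSL); apply: eq_bigr => i _.
  by case: ifP => _; rewrite ?mul0r.
by rewrite !conv.
Qed.
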